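(* Let $m$ and $n$ be positive integers divisible by $4$, and let $t\ge 2$ and $r\ge 1$ be integers. Then (i) $\gamma_{tR}(C_m\times C_n)=\frac{mn}{2}$; (ii) $\gamma_{tR}(C_m\times K_{t,t})=2m$; (iii) $\gamma_{tR}(C_m\times P_{C_{3r}})=2mr$; (iv) $\gamma_{tR}(K_{t,t}\times P_{C_{3r}})=8r$.
   Context: $C_k$ is the cycle on $k$ vertices. The prism $P_{C_{3r}}$ over $C_{3r}$ is the Cartesian product $C_{3r}\,\Box\,K_2$ (two disjoint copies of $C_{3r}$ with a perfect matching joining corresponding vertices). A total Roman dominating function on a graph $X$ without isolated vertices is a map $f:V(X)\to\{0,1,2\}$ such that every vertex with label 0 has a neighbor with label 2 and the subgraph induced by vertices with positive labels has no isolated vertices; $\gamma_{tR}(X)$ is the minimum of $\sum_v f(v)$ over such $f$. The direct product $G\times H$ has vertex set $V(G)\times V(H)$, with $(g,h)(g',h')$ an edge iff $gg'\in E(G)$ and $hh'\in E(H)$. *)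

(* Defs.v *)
From mathcomp Require Import all_boot all_order.
Set Implicit Arguments. Unset Strict Implicit. Unset Printing Implicit Defensive.

(* Cycle C_k on vertex set {0,...,k-1}: i ~ j iff j = i+1 mod k or i = j+1 mod k
   (a simple cycle when k >= 3). *)
Definition cycle_rel (k : nat) : rel 'I_k :=
  fun i j => (val j == i.+1 %% k) || (val i == j.+1 %% k).

(* Complete bipartite graph K_{t,t}: vertices (side, index), adjacent iff on
   different sides. *)
Definition Ktt_rel (t : nat) : rel (bool * 'I_t) :=
  fun x y => x.1 != y.1.

(* Prism P_{C_k} = C_k [] K_2 : vertices (cycle vertex, copy). *)
Definition prism_rel (k : nat) : rel ('I_k * bool) :=
  fun x y => ((x.2 == y.2) && cycle_rel x.1 y.1) || ((x.1 == y.1) && (x.2 != y.2)).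

Definition direct_rel (V W : finType) (e1 : rel V) (e2 : rel W) : rel (V * W) :=
  fun x y => e1 x.1 y.1 && e2 x.2 y.2.

Definition is_TRDF (V : finType) (e : rel V) (f : {ffun V -> 'I_3}) : bool :=
  [forall v, (val (f v) == 0) ==> [exists u, e v u && (val (f u) == 2)]] &&
  [forall v, (val (f v) != 0) ==> [exists u, e v u && (val (f u) != 0)]].

Definition weight (V : finType) (f : {ffun V -> 'I_3}) : nat := \sum_(v : V) val (f v).

(* The default value 2*|V| is the weight of
   the constant-2 function, which is a TRDF whenever the graph has no isolated
   vertices, so the default never matters for such graphs. *)
Definition gamma_tR (V : finType) (e : rel V) : nat :=
  \big[minn/(2 * #|V|)%N]_(f : {ffun V -> 'I_3} | is_TRDF e f) weight f.

(* Main.v *)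
Require Import Defs.
From mathcomp Require Import all_boot all_order zify.
Set Implicit Arguments. Unset Strict Implicit. Unset Printing Implicit Defensive.

Lemma sum_ind (T : finType) (P : pred T) : \sum_(x : T) (P x : nat) = #|P|.
Proof. rewrite -sum1_card [RHS]big_mkcond /=; apply: eq_bigr => x _; by rewrite unfold_in; case: (P x). Qed.

Lemma sum_mod p a (F : nat -> nat) :
  \sum_(0 <= i < p * a) F (i %% p) = a * \sum_(0 <= i < p) F i.
Proof.
elim: a => [|a IH]; first by rewrite muln0 big_geq.
rewrite [p * a.+1]mulnS [p + _]addnC (@big_cat_nat _ _ _ (p * a)) ?leq_addr //= IH.
have -> : \sum_(p * a <= i < p * a + p) F (i %% p) = \sum_(0 <= i < p) F i.
  rewrite -{1}[p * a]add0n big_addn addKn.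
  apply: eq_big_nat => i /andP[_ ip].
  by rewrite addnC mulnC modnMDl modn_small.
by rewrite mulSn addnC.
Qed.

Definition two : 'I_3 := @Ordinal 3 2 isT.
Definition tdf (T : finType) (A : pred T) : {ffun T -> 'I_3} :=
  [ffun x => if A x then two else ord0].

Lemma tdf_TRDF (T : finType) (e : rel T) (A : pred T) :
  (forall v, exists u, e v u && A u) -> is_TRDF e (tdf A).
Proof.
move=> H; apply/andP; split; apply/forallP => v; apply/implyP => _;
 have [u /andP[evu Au]] := H v; apply/existsP; exists u; by rewrite evu ffunE Au.
Qed.

Lemma tdf_weight (T : finType) (A : pred T) : weight (tdf A) = 2 * #|A|.
Proof.
rewrite -sum_ind big_distrr /weight; apply: eq_bigr => x _; rewrite ffunE.
by case: (A x).
Qed.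

Lemma prod_td (V W : finType) (e1 : rel V) (e2 : rel W) (A : pred V) (B : pred W) :
  (forall v, exists u, e1 v u && A u) -> (forall w, exists x, e2 w x && B x) ->
  forall p, exists q, direct_rel e1 e2 p q && [pred q | A q.1 && B q.2] q.
Proof.
move=> HA HB [v w]; have [u /andP[e1u Au]] := HA v; have [x /andP[e2x Bx]] := HB w.
by exists (u, x); rewrite /direct_rel /= e1u e2x Au Bx.
Qed.

Lemma card_prodP (V W : finType) (A : pred V) (B : pred W) :
  #|[pred q : V * W | A q.1 && B q.2]| = #|A| * #|B|.
Proof.
have -> : #|[pred q : V * W | A q.1 && B q.2]| = #|setX [set x | A x] [set y | B y]|.
  by apply: eq_card => q; rewrite !inE.
by rewrite cardsX !cardsE.
Qed.

Lemma prod_sym (V W : finType) (e1 : rel V) (e2 : rel W) :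
  symmetric e1 -> symmetric e2 -> symmetric (direct_rel e1 e2).
Proof. by move=> s1 s2 x y; rewrite /direct_rel s1 s2. Qed.

Lemma prod_deg (V W : finType) (e1 : rel V) (e2 : rel W) D1 D2 :
  (forall v, #|[set u | e1 v u]| <= D1) -> (forall w, #|[set u | e2 w u]| <= D2) ->
  forall p, #|[set q | direct_rel e1 e2 p q]| <= D1 * D2.
Proof.
move=> d1 d2 [v w].
have sub : [set q | direct_rel e1 e2 (v, w) q] \subset setX [set u | e1 v u] [set u | e2 w u].
  by apply/subsetP => q; rewrite !inE.
by apply: (leq_trans (subset_leq_card sub)); rewrite cardsX leq_mul.
Qed.
Lemma cycle_sym k : symmetric (@cycle_rel k).
Proof. by move=> x y; rewrite /cycle_rel orbC. Qed.

Lemma modS_small k x : x < k -> x.+1 %% k = if x.+1 == k then 0 else x.+1.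
Proof. move=> xk; case: eqP => [->|ne]; first by rewrite modnn. rewrite modn_small //; lia. Qed.

Lemma cycle_deg k (v : 'I_k) : #|[set u | cycle_rel v u]| <= 2.
Proof.
have sub : [set u | cycle_rel v u] \subset
   [set u : 'I_k | val u == v.+1 %% k] :|: [set u : 'I_k | val v == u.+1 %% k].
  by apply/subsetP => u; rewrite !inE.
apply: (leq_trans (subset_leq_card sub)); apply: (leq_trans (leq_card_setU _ _)).
apply: (@leq_add _ _ 1 1); apply/card_le1_eqP => x y; rewrite !inE.
  by move=> /eqP ex /eqP ey; apply: val_inj; rewrite /= ex ey.
move=> /eqP ex /eqP ey; apply: val_inj => /=.
have := ltn_ord x; have := ltn_ord y; have := ltn_ord v.
move: ex ey; rewrite !modS_small //.
case: (x.+1 == k) /eqP; case: (y.+1 == k) /eqP; lia.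
Qed.

Lemma cycle_next k (v : 'I_k) : exists u : 'I_k, cycle_rel v u && (val u == v.+1 %% k).
Proof.
have k0 : 0 < k by have := ltn_ord v; lia.
by exists (Ordinal (ltn_pmod v.+1 k0)); rewrite /cycle_rel /= eqxx.
Qed.

Lemma cycle_prev k (v : 'I_k) : 0 < v -> exists u : 'I_k, cycle_rel v u && (val u == v.-1).
Proof.
move=> v0; have vp : v.-1 < k by have := ltn_ord v; lia.
exists (Ordinal vp); rewrite /cycle_rel /=.
apply/andP; split; last exact/eqP.
apply/orP; right; rewrite prednK // modn_small //.
Qed.

Lemma cycle_td k (v : 'I_k) : 4 %| k -> exists u : 'I_k, cycle_rel v u && (u %% 4 < 2).
Proof.
move=> k4.
case: (boolP ((v %% 4 == 0) || (v %% 4 == 3))) => H.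
  have [u /andP[evu /eqP uv]] := cycle_next v; exists u; rewrite evu uv modn_dvdm //.
  move: H; lia.
have v0 : 0 < v by move: H; lia.
have [u /andP[evu /eqP uv]] := cycle_prev v0; exists u; rewrite evu uv.
move: H v0; lia.
Qed.

Lemma prism_sym k : symmetric (@prism_rel k).
Proof.
by move=> [a b] [c d]; rewrite /prism_rel /= cycle_sym (eq_sym b) (eq_sym a).
Qed.

Lemma prism_deg k (v : 'I_k * bool) : #|[set u | prism_rel v u]| <= 3.
Proof.
have sub : [set u | prism_rel v u] \subset
  ((fun u => (u, v.2)) @: [set u | cycle_rel v.1 u]) :|: [set (v.1, ~~ v.2)].
  apply/subsetP => -[c d]; rewrite !inE /prism_rel /=.
  case/orP => [/andP[/eqP e2 c1] | /andP[/eqP e1 ne]].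
    apply/orP; left; apply/imsetP; exists c; first by rewrite inE.
    by rewrite e2.
  apply/orP; right; rewrite e1; move: ne; by case: (v.2); case: d.
apply: (leq_trans (subset_leq_card sub)); apply: (leq_trans (leq_card_setU _ _)).
rewrite cards1; apply: (@leq_add _ _ 2 1) => //.
exact: (leq_trans (leq_imset_card _ _) (cycle_deg _)).
Qed.

Lemma prism_td r (v : 'I_(3 * r) * bool) :
  exists u, prism_rel v u && [pred y : 'I_(3 * r) * bool | y.1 %% 3 == 0] u.
Proof.
case: v => j b.
case: (boolP (j %% 3 == 0)) => H0.
  by exists (j, ~~ b); rewrite /prism_rel /= H0 eqxx; case: b.
case: (boolP (j %% 3 == 1)) => H1.
  have j0 : 0 < j by move: H1; lia.
  have [u /andP[evu /eqP uv]] := cycle_prev j0; exists (u, b).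
  rewrite /prism_rel /= eqxx evu /= uv; move: H1 j0; lia.
have [u /andP[evu /eqP uv]] := cycle_next j; exists (u, b).
rewrite /prism_rel /= eqxx evu /= uv modn_dvdm ?dvdn_mulr //; move: H0 H1; lia.
Qed.

Lemma Ktt_sym t : symmetric (@Ktt_rel t).
Proof. by move=> x y; rewrite /Ktt_rel eq_sym. Qed.

Lemma Ktt_deg t (v : bool * 'I_t) : #|[set u | Ktt_rel v u]| <= t.
Proof.
have sub : [set u | Ktt_rel v u] \subset [set (~~ v.1, i) | i : 'I_t].
  apply/subsetP => -[s i]; rewrite inE /Ktt_rel /= => ne.
  apply/imsetP; exists i => //; congr (_, _); move: ne; by case: s; case: (v.1).
apply: (leq_trans (subset_leq_card sub)).
by apply: (leq_trans (leq_imset_card _ _)); rewrite card_ord.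
Qed.

Lemma Ktt_td t (v : bool * 'I_t) :
  exists u, Ktt_rel v u && [pred x : bool * 'I_t | val x.2 == 0] u.
Proof.
have t0 : 0 < t by case: v => _ [i]; lia.
exists (~~ v.1, Ordinal t0); rewrite /Ktt_rel /= eqxx andbT.
by case: (v.1).
Qed.
Lemma trdf_lower (V : finType) (e : rel V) (D : nat) (f : {ffun V -> 'I_3}) :
  symmetric e -> 2 <= D -> (forall v, #|[set u | e v u]| <= D) ->
  is_TRDF e f -> 2 * #|V| <= D * weight f.
Proof.
move=> esym D2 deg /andP[/forallP H0 /forallP H1].
pose c k v := (val (f v) == k : nat).
have Hw : weight f = \sum_v c 1 v + 2 * \sum_v c 2 v.
  rewrite /weight big_distrr -big_split /=; apply: eq_bigr => v _.
  rewrite /c; case: (f v) => [[|[|[|k]]] //].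
have HV : #|V| = \sum_v c 0 v + \sum_v c 1 v + \sum_v c 2 v.
  rewrite -!big_split /= -sum1_card; apply: eq_bigr => v _.
  rewrite /c; case: (f v) => [[|[|[|k]]] //].
pose d v u := (e v u && (val (f u) == 0) : nat).
have S0 : \sum_u c 0 u <= \sum_u \sum_v c 2 v * d v u.
  apply: leq_sum => u _; rewrite /c.
  case: eqP => // fu0.
  have /existsP[v /andP[euv fv2]] := implyP (H0 u) (introT eqP fu0).
  rewrite (bigD1 v) //= /d (esym v u) euv fu0 fv2 /=.
  by rewrite leq_addr.
have S1 : \sum_u \sum_v c 2 v * d v u <= (D - 1) * \sum_v c 2 v.
  rewrite exchange_big /= big_distrr /=; apply: leq_sum => v _.
  rewrite -big_distrr /= mulnC; rewrite /c; case: eqP => fv2; last by rewrite muln0.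
  rewrite /= muln1.
  have fvn : val (f v) != 0 by rewrite fv2.
  have /existsP[u0 /andP[evu fu0]] := implyP (H1 v) fvn.
  rewrite /d sum_ind.
  have sub : [pred u | e v u && (val (f u) == 0)] \subset [set u | e v u] :\ u0.
    apply/subsetP => u; rewrite !inE /= => /andP[-> /eqP fu]; rewrite andbT.
    apply/eqP => E; move: fu0; rewrite -E; apply/negP; rewrite negbK; apply/eqP; exact: fu.
  apply: (leq_trans (subset_leq_card sub)).
  have := cardsD1 u0 [set u | e v u]; rewrite inE evu /= => E.
  have := deg v; lia.
have := leq_trans S0 S1; rewrite Hw HV; nia.
Qed.

Lemma bigmin_le (I : eqType) (r : seq I) idx (P : pred I) (F : I -> nat) i0 :
  i0 \in r -> P i0 -> \big[minn/idx]_(i <- r | P i) F i <= F i0.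
Proof.
elim: r => // a r IH; rewrite inE big_cons => /orP[/eqP<-|ir] Pi.
  by rewrite Pi geq_minl.
case: (P a); last exact: IH.
by rewrite geq_min IH ?orbT.
Qed.

Lemma gamma_exact (V : finType) (e : rel V) D K (f0 : {ffun V -> 'I_3}) :
  symmetric e -> 2 <= D -> (forall v, #|[set u | e v u]| <= D) ->
  D * K = 2 * #|V| -> is_TRDF e f0 -> weight f0 = K -> gamma_tR e = K.
Proof.
move=> esym D2 deg DK f0T wf0; apply/eqP; rewrite eqn_leq; apply/andP; split.
  by rewrite /gamma_tR -wf0; apply: bigmin_le; rewrite ?mem_index_enum.
rewrite /gamma_tR; apply: (big_ind (fun x => K <= x)).
- nia.
- by move=> x y; rewrite leq_min => -> ->.
- move=> f fT; have := trdf_lower esym D2 deg fT; nia.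
Qed.

Lemma cycle_card k : 4 %| k -> 2 * #|[pred i : 'I_k | i %% 4 < 2]| = k.
Proof.
move=> /dvdnP[a Ha]; subst k.
rewrite -sum_ind -(big_mkord xpredT (fun i => (i %% 4 < 2 : nat))) [a * 4]mulnC.
have E := sum_mod 4 a (fun i => (i < 2 : nat)); simpl in E; rewrite E.
rewrite unlock /=; lia.
Qed.

Lemma prism_card r : #|[pred y : 'I_(3 * r) * bool | y.1 %% 3 == 0]| = 2 * r.
Proof.
have -> : #|[pred y : 'I_(3 * r) * bool | y.1 %% 3 == 0]| =
   #|[pred q : 'I_(3 * r) * bool | [pred j : 'I_(3 * r) | j %% 3 == 0] q.1 && predT q.2]|.
  by apply: eq_card => -[j b]; rewrite !inE /= andbT.
rewrite card_prodP.
rewrite -sum_ind -(big_mkord xpredT (fun i => (i %% 3 == 0 : nat))).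
have E := sum_mod 3 r (fun i => (i == 0 : nat)); simpl in E; rewrite E.
rewrite unlock /=. have -> : #|(@predT bool)| = 2 by rewrite -card_bool; apply: eq_card. lia.
Qed.

Lemma Ktt_card t : 0 < t -> #|[pred x : bool * 'I_t | val x.2 == 0]| = 2.
Proof.
move=> t0.
have -> : #|[pred x : bool * 'I_t | val x.2 == 0]| =
   #|[pred q : bool * 'I_t | predT q.1 && pred1 (Ordinal t0) q.2]|.
  apply: eq_card => -[b i]; rewrite !inE /=.
  by [].
have := card_prodP (@predT bool) (pred1 (Ordinal t0)); move=> ->.
by rewrite card1; have -> : #|(@predT bool)| = 2 by rewrite -card_bool; apply: eq_card.
Qed.

Lemma half_aux A B : 2 * (A * B) = (2 * A * (2 * B)) %/ 2.
Proof. by rewrite (_ : 2 * A * (2 * B) = 2 * (A * B) * 2) ?mulnK //; nia. Qed.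

Lemma aux3 A r : 2 * (A * (2 * r)) = 2 * (2 * A) * r.
Proof. nia. Qed.

Theorem corollary4p6 (m n t r : nat) :
  0 < m -> 0 < n -> 4 %| m -> 4 %| n -> 2 <= t -> 1 <= r ->
  [/\ gamma_tR (direct_rel (@cycle_rel m) (@cycle_rel n)) = (m * n) %/ 2,
      gamma_tR (direct_rel (@cycle_rel m) (@Ktt_rel t)) = 2 * m,
      gamma_tR (direct_rel (@cycle_rel m) (@prism_rel (3 * r))) = 2 * m * r &
      gamma_tR (direct_rel (@Ktt_rel t) (@prism_rel (3 * r))) = 8 * r].
Proof.
move=> m0 n0 m4 n4 t2 r1.
have cm := cycle_card m4; have cn := cycle_card n4.
have t0 : 0 < t by lia.
have ck := Ktt_card t0; have cp := prism_card r.
split.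
- apply: (@gamma_exact _ _ (2 * 2) _
    (tdf [pred q : 'I_m * 'I_n | [pred i : 'I_m | i %% 4 < 2] q.1 && [pred i : 'I_n | i %% 4 < 2] q.2])).
  + exact: prod_sym (@cycle_sym m) (@cycle_sym n).
  + by [].
  + exact: prod_deg (@cycle_deg m) (@cycle_deg n).
  + rewrite card_prod !card_ord; move: m4 n4 => /dvdnP[a ->] /dvdnP[b ->].
    rewrite [X in X %/ 2](_ : _ = (a * b * 8) * 2) ?mulnK //; nia.
  + apply: tdf_TRDF; apply: prod_td => v; exact: cycle_td.
  + rewrite tdf_weight card_prodP -[in RHS]cm -[in RHS]cn.
    exact: half_aux.
- apply: (@gamma_exact _ _ (2 * t) _
    (tdf [pred q : 'I_m * (bool * 'I_t) | [pred i : 'I_m | i %% 4 < 2] q.1 && [pred x : bool * 'I_t | val x.2 == 0] q.2])).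
  + exact: prod_sym (@cycle_sym m) (@Ktt_sym t).
  + lia.
  + exact: prod_deg (@cycle_deg m) (@Ktt_deg t).
  + rewrite card_prod card_prod !card_ord card_bool; nia.
  + apply: tdf_TRDF; apply: prod_td => v; [exact: cycle_td | exact: Ktt_td].
  + rewrite tdf_weight card_prodP ck; by rewrite [_ * 2]mulnC cm.
- refine (@gamma_exact _ _ (2 * 3) _
    (tdf [pred q : 'I_m * ('I_(3 * r) * bool) | [pred i : 'I_m | i %% 4 < 2] q.1 && [pred y : 'I_(3 * r) * bool | y.1 %% 3 == 0] q.2]) _ _ _ _ _ _).
  + exact: prod_sym (@cycle_sym m) (@prism_sym (3 * r)).
  + by [].
  + exact: prod_deg (@cycle_deg m) (@prism_deg (3 * r)).
  + rewrite card_prod card_prod !card_ord card_bool; nia.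
  + apply: tdf_TRDF; apply: prod_td => v; [exact: cycle_td | exact: prism_td].
  + rewrite tdf_weight card_prodP cp -[in RHS]cm; exact: aux3.
- apply: (@gamma_exact _ _ (t * 3) _
    (tdf [pred q : (bool * 'I_t) * ('I_(3 * r) * bool) | [pred x : bool * 'I_t | val x.2 == 0] q.1 && [pred y : 'I_(3 * r) * bool | y.1 %% 3 == 0] q.2])).
  + exact: prod_sym (@Ktt_sym t) (@prism_sym (3 * r)).
  + lia.
  + exact: prod_deg (@Ktt_deg t) (@prism_deg (3 * r)).
  + rewrite card_prod !card_prod !card_ord card_bool; nia.
  + apply: tdf_TRDF; apply: prod_td => v; [exact: Ktt_td | exact: prism_td].
  + rewrite tdf_weight card_prodP cp ck; lia.
Qed.
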